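(* Let $H_A$ and $H_B$ be finite-dimensional Hilbert spaces with $n=\dim H_A$, and let $|\phi\rangle,|\psi\rangle\in H_A\otimes H_B$ be unit vectors such that $\langle\phi|\psi\rangle$ is a real positive number. Let $s,t>0$ with $s+t=1$, $s\le t$ and $\sqrt{s/t}\ge\langle\phi|\psi\rangle$. Then there exist an orthonormal basis $\{|i\rangle\}_{i=1}^n$ of $H_A$, nonnegative reals $s_i,t_i$ and unit vectors $|\eta_i\rangle,|\gamma_i\rangle\in H_B$ ($i=1,\dots,n$) such that $$|\phi\rangle=\sum_{i=1}^n\sqrt{s_i}\,|i\rangle|\eta_i\rangle,\qquad |\psi\rangle=\sum_{i=1}^n\sqrt{t_i}\,|i\rangle|\gamma_i\rangle,$$ and for every $i=1,\dots,n$: $\langle\eta_i|\gamma_i\rangle$ is real, $s\,s_i\le t\,t_i$, and $\sqrt{s\,s_i}\ge\sqrt{t\,t_i}\,\langle\eta_i|\gamma_i\rangle$ (i.e. $\sqrt{s s_i/(t t_i)}\ge\langle\eta_i|\gamma_i\rangle$ whenever $t_i>0$).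
   Context: Here $s$ and $t$ are the prior probabilities with which the states $|\phi\rangle$ and $|\psi\rangle$ are prepared. The paper adopts, throughout, the normalization (obtained by multiplying $|\psi\rangle$ by a global phase) that $\langle\phi|\psi\rangle>0$, and the lemma is proved under the standing case assumption $\sqrt{s/t}\ge\langle\phi|\psi\rangle$. *)

(* Defs.v *)
(* Complex scalars: an arbitrary numClosedFieldType C
   (e.g. the complex numbers); H_A = C^n, H_B = C^m (row vectors),
   H_A (x) H_B = n x m matrices, with the standard inner products. *)
From HB Require Import structures.
From mathcomp Require Import all_boot all_order all_algebra.
Set Implicit Arguments. Unset Strict Implicit. Unset Printing Implicit Defensive.
Import Order.TTheory GRing.Theory Num.Theory.
Local Open Scope ring_scope.

Definition ip (C : numClosedFieldType) (p q : nat) (A B : 'M[C]_(p, q)) : C :=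
  \sum_(i < p) \sum_(j < q) (A i j)^* * B i j.

Definition tens (C : numClosedFieldType) (n m : nat) (u : 'rV[C]_n) (v : 'rV[C]_m)
  : 'M[C]_(n, m) := \matrix_(i < n, j < m) (u 0 i * v 0 j).

(* Main.v *)
Require Import Defs.
From HB Require Import structures.
From mathcomp Require Import all_boot all_order all_algebra.
From mathcomp Require Import ring.
Import Order.TTheory GRing.Theory Num.Theory.
Local Open Scope ring_scope.

Lemma twobytwo (C : numClosedFieldType) (a b c d l : C) : 0 < l -> l < 1 ->
  exists al be : C, al * al^* + be * be^* = 1 /\
   al * al^* * a + al * be^* * b + be * al^* * c + be * be^* * d = l * a + (1 - l) * d.
Proof.
move=> l0 l1.
have lR : l \is Num.real by rewrite gtr0_real.
have lc : l^* = l by rewrite conj_Creal.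
case: (eqVneq a d) => [->|ad].
  exists 1, 0; rewrite rmorph1 rmorph0; split; ring.
set k := (a - d)^*.
have kc : k^* = a - d by rewrite conjCK.
have kn0 : k != 0 by rewrite conjC_eq0 subr_eq0.
set g := b * k - (c * k)^*.
set w := if g == 0 then 1 else g.
have wn0 : w != 0 by rewrite /w; case: ifP => [_|/negbT //]; rewrite oner_eq0.
set rho := w * w^*.
have rho0 : 0 < rho by rewrite lt_def mul_conjC_eq0 wn0 mul_conjC_ge0.
set z := w^* * b + w * c.
have zkR : (z * k) \is Num.real.
  rewrite CrealE; apply/eqP.
  have E : z * k - (z * k)^* = w^* * g - w * g^*.
    rewrite /z /g !(rmorphM, rmorphD, rmorphB, rmorphN) /= !conjCK; ring.
  apply/eqP; rewrite eq_sym -subr_eq0 E /w; case: ifP => [/eqP ->|_].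
    by rewrite rmorph0 !mulr0 subrr.
  by rewrite mulrC subrr.
set R := z * k.
set q := (a - d) * k.
have q0 : 0 < q by rewrite /q /k lt_def mul_conjC_eq0 subr_eq0 ad mul_conjC_ge0.
set A := l * rho * q.
have A0 : 0 < A by rewrite /A; apply: mulr_gt0 => //; apply: mulr_gt0.
set B := (1 - l) * q.
have B0 : 0 <= B by apply: mulr_ge0; rewrite ?subr_ge0 ltW.
set Di := R ^+ 2 + 4 * A * B.
have Di0 : 0 <= Di by apply: addr_ge0; [apply: real_exprn_even_ge0 | apply: mulr_ge0 => //; apply: mulr_ge0; rewrite ?ltW].
set S := sqrtC Di.
set T := (R + S) / (2 * A).
have TR : T \is Num.real.
  rewrite /T; apply: rpredM; first by apply: rpredD => //; exact: sqrtC_real.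
  by rewrite rpredV; apply: gtr0_real; apply: mulr_gt0.
have Tc : T^* = T by rewrite conj_Creal.
have quad : A * T ^+ 2 - R * T - B = 0.
  have SS : S ^+ 2 = Di by rewrite sqrtCK.
  have An0 : A != 0 by rewrite gt_eqF.
  have -> : A * T ^+ 2 - R * T - B = (S ^+ 2 - Di) / (4 * A).
    by rewrite /T /Di; field.
  by rewrite SS subrr mul0r.
set N := 1 + rho * T ^+ 2.
have E0 : a + T * z + rho * T ^+ 2 * d = (l * a + (1 - l) * d) * N.
  apply/eqP; rewrite -subr_eq0.
  have : k * (a + T * z + rho * T ^+ 2 * d - (l * a + (1 - l) * d) * N) = 
     - (A * T ^+ 2 - R * T - B) by rewrite /A /R /B /q /N; ring.
  by rewrite quad oppr0 => /eqP; rewrite mulf_eq0 (negbTE kn0).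
have N0 : 0 < N.
  rewrite /N; apply: (lt_le_trans ltr01); rewrite lerDl; apply: mulr_ge0.
    exact: ltW.
  exact: real_exprn_even_ge0.
set sN := sqrtC N.
have sN0 : 0 < sN by rewrite sqrtC_gt0.
have sNc : sN^* = sN by rewrite geC0_conj // ltW.
have i2 : sN^-1 * sN^-1 = N^-1 by rewrite -invfM -expr2 sqrtCK.
have Nn0 : N != 0 by rewrite gt_eqF.
exists sN^-1, (w * T / sN).
clearbody sN T; rewrite !(rmorphM, fmorphV) /= Tc sNc.
split.
  have -> : sN^-1 * sN^-1 + w * T / sN * (w^* * T * sN^-1) = (sN^-1 * sN^-1) * N.
    by rewrite /N /rho; ring.
  by rewrite i2 mulVf.
have -> : sN^-1 * sN^-1 * a + sN^-1 * (w^* * T * sN^-1) * b + w * T / sN * sN^-1 * c +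
  w * T / sN * (w^* * T * sN^-1) * d = (sN^-1 * sN^-1) * (a + T * z + rho * T ^+ 2 * d).
  by rewrite /z /rho; ring.
by rewrite i2 E0 mulrCA mulVf ?mulr1.
Qed.

Set Implicit Arguments. Unset Strict Implicit.

Definition qf (C : numClosedFieldType) n (G : 'M[C]_n) (v : 'I_n -> C) : C :=
  \sum_k \sum_l v k * G k l * (v l)^*.
Definition nv (C : numClosedFieldType) n (v : 'I_n -> C) : C := \sum_k v k * (v k)^*.

Lemma trE (C : numClosedFieldType) n (A : 'M[C]_n) : \tr A = \sum_i A i i. Proof. by []. Qed.
Lemma qfE (C : numClosedFieldType) n (G : 'M[C]_n) v :
  qf G v = \sum_k \sum_l v k * G k l * (v l)^*. Proof. by []. Qed.
Lemma nvE (C : numClosedFieldType) n (v : 'I_n -> C) :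
  nv v = \sum_k v k * (v k)^*. Proof. by []. Qed.

Lemma NR (C : numClosedFieldType) n (G : 'M[C]_n.+1) :
  exists v, nv v = 1 /\ qf G v = \tr G / n.+1%:R.
Proof.
elim: n G => [|n IH] G.
  exists (fun _ => 1); rewrite /nv /qf /mxtrace !big_ord1 rmorph1 !mulr1 mul1r.
  by rewrite divr1.
pose G' : 'M[C]_n.+1 := \matrix_(i, j) G (widen_ord (leqnSn _) i) (widen_ord (leqnSn _) j).
have [v' [nv' qv']] := IH G'.
set a := qf G' v'.
pose b := \sum_k v' k * G (widen_ord (leqnSn _) k) ord_max.
pose c := \sum_l G ord_max (widen_ord (leqnSn _) l) * (v' l)^*.
pose d := G ord_max ord_max.
pose l : C := n.+1%:R / n.+2%:R.
have l0 : 0 < l by rewrite divr_gt0 ?ltr0Sn.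
have l1 : l < 1 by rewrite ltr_pdivrMr ?ltr0Sn // mul1r ltr_nat.
have [al [be [H1 H2]]] := twobytwo _ a b c d _ l0 l1.
pose v (i : 'I_n.+2) := if (i < n.+1)%N then al * v' (inord i) else be.
have vw : forall k : 'I_n.+1, v (widen_ord (leqnSn _) k) = al * v' k.
  by move=> k; rewrite /v /= ltn_ord inord_val.
have vm : v ord_max = be by rewrite /v /= ltnn.
exists v; split.
  rewrite /nv big_ord_recr /= vm.
  under eq_bigr do rewrite vw rmorphM mulrACA.
  by rewrite -mulr_sumr -/(nv v') nv' mulr1.
have trG : \tr G = \tr G' + d.
  rewrite !trE big_ord_recr /=; congr (_ + _).
  by apply: eq_bigr => i _; rewrite mxE.
have -> : qf G v = al * al^* * a + al * be^* * b + be * al^* * c + be * be^* * d.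
  rewrite qfE big_ord_recr /= [X in _ + X]big_ord_recr /=.
  have -> : \sum_(i < n.+1) \sum_(l < n.+2) v (widen_ord (leqnSn n.+1) i) * G (widen_ord (leqnSn n.+1) i) l * (v l)^*
     = \sum_(i < n.+1) (\sum_(j < n.+1) v (widen_ord (leqnSn n.+1) i) * G (widen_ord (leqnSn n.+1) i) (widen_ord (leqnSn n.+1) j) * (v (widen_ord (leqnSn n.+1) j))^*
         + v (widen_ord (leqnSn n.+1) i) * G (widen_ord (leqnSn n.+1) i) ord_max * (v ord_max)^*).
    by apply: eq_bigr => i _; rewrite big_ord_recr.
  rewrite big_split /= vm.
  have -> : \sum_(i < n.+1) \sum_(j < n.+1) v (widen_ord (leqnSn n.+1) i) * G (widen_ord (leqnSn n.+1) i) (widen_ord (leqnSn n.+1) j) * (v (widen_ord (leqnSn n.+1) j))^* = al * al^* * a.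
    rewrite /a qfE mulr_sumr; apply: eq_bigr => i _; rewrite mulr_sumr; apply: eq_bigr => j _.
    by rewrite !vw mxE rmorphM; ring.
  have -> : \sum_(i < n.+1) v (widen_ord (leqnSn n.+1) i) * G (widen_ord (leqnSn n.+1) i) ord_max * be^* = al * be^* * b.
    by rewrite /b mulr_sumr; apply: eq_bigr => i _; rewrite vw; ring.
  have -> : \sum_(i < n.+1) be * G ord_max (widen_ord (leqnSn n.+1) i) * (v (widen_ord (leqnSn n.+1) i))^* = be * al^* * c.
    by rewrite /c !mulr_sumr; apply: eq_bigr => i _; rewrite vw rmorphM; ring.
  rewrite /d; ring.
rewrite H2 trG /a qv' /l.
by field; rewrite -(natrD _ 2 n) -(natrD _ 1 n) !pnatr_eq0.
Qed.


Lemma sum_delta_l (C : numClosedFieldType) n (i : 'I_n) (F : 'I_n -> C) :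
  \sum_k (i == k)%:R * F k = F i.
Proof.
rewrite (bigD1 i) //= eqxx mul1r big1 ?addr0 // => k /negbTE.
by rewrite eq_sym => ->; rewrite mul0r.
Qed.

Lemma sum_delta_r (C : numClosedFieldType) n (i : 'I_n) (F : 'I_n -> C) :
  \sum_k F k * (k == i)%:R = F i.
Proof.
rewrite (bigD1 i) //= eqxx mulr1 big1 ?addr0 // => k /negbTE ->.
by rewrite mulr0.
Qed.

Definition onb (C : numClosedFieldType) n (f : 'I_n -> 'I_n -> C) :=
  forall i j, \sum_k (f i k)^* * f j k = (i == j)%:R.

Lemma complete (C : numClosedFieldType) n (v : 'I_n.+1 -> C) : nv v = 1 ->
  exists (f : 'I_n.+1 -> 'I_n.+1 -> C) (mu : C), onb f /\ (forall k, f ord0 k = mu * v k).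
Proof.
move=> nv1.
pose v0 := v ord0.
pose mu : C := if v0 == 0 then 1 else v0^* / `|v0|.
have muv : mu * v0 = `|v0|.
  rewrite /mu; case: ifP => [/eqP ->|nz]; first by rewrite mulr0 normr0.
  rewrite mulrAC [v0^* * v0]mulrC -normCK expr2 mulfK //.
  by rewrite normr_eq0 nz.
have muc : mu * mu^* = 1.
  rewrite /mu; case: ifP => [_|nz]; first by rewrite rmorph1 mulr1.
  have n0 : `|v0| != 0 by rewrite normr_eq0 nz.
  rewrite rmorphM fmorphV /= conjCK (geC0_conj (normr_ge0 _)) mulrACA.
  by rewrite [v0^* * v0]mulrC -normCK -invfM -expr2 mulfV // expf_neq0.
have mvc : mu^* * (v ord0)^* = `|v0| by rewrite -rmorphM muv /= geC0_conj.
pose w k : C := (k == ord0)%:R + mu * v k.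
have wc0 : (w ord0)^* = 1 + `|v0|.
  by rewrite /w eqxx rmorphD rmorph1 rmorphM /= mvc.
pose N := \sum_k w k * (w k)^*.
have N2 : N = 2 * (w ord0)^*.
  have E : forall k, w k * (w k)^* = (ord0 == k)%:R * (1 + mu^* * (v ord0)^* + mu * v ord0)
        + mu * mu^* * (v k * (v k)^*).
    move=> k; rewrite /w rmorphD rmorphM /= rmorph_nat.
    case: (eqVneq k ord0) => [->|nk] /=; first by ring.
    by ring.
  rewrite /N (eq_bigr _ (fun k _ => E k)) big_split /= sum_delta_l -mulr_sumr -nvE nv1 muc.
  rewrite wc0 mvc muv; ring.
have w0n0 : (w ord0)^* != 0.
  by rewrite wc0 gt_eqF // (lt_le_trans ltr01) // lerDl normr_ge0.
have N0 : N != 0 by rewrite N2 mulf_neq0 // pnatr_eq0.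
have Nc : N^* = N by rewrite N2 wc0 rmorphM /= rmorph_nat rmorphD /= rmorph1 (geC0_conj (normr_ge0 v0)).
pose c := 2 / N.
have cc : c^* = c by rewrite /c rmorphM /= fmorphV /= rmorph_nat Nc.
have cdef : c = 2 / N by [].
clearbody c.
pose f i k := (i == k)%:R - c * (w i)^* * w k.
exists f, (- mu); split.
  move=> i j.
  have E : forall k, (f i k)^* * f j k = (i == k)%:R * ((j == k)%:R - c * (w j)^* * w k)
     + (- (c * w i)) * ((w k)^* * (k == j)%:R) + (c * c * w i * (w j)^*) * (w k * (w k)^*).
    move=> k; rewrite /f rmorphB /= rmorph_nat !rmorphM /= conjCK cc (eq_sym k j); ring.
  rewrite (eq_bigr _ (fun k _ => E k)) !big_split /= sum_delta_l -!mulr_sumr sum_delta_r -/N.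
  by rewrite eq_sym cdef; field.
have h1 : 2 / (2 * (w ord0)^*) * (w ord0)^* = 1 by field.
move=> k; rewrite /f cdef N2 h1 mul1r /w (eq_sym ord0 k); ring.
Qed.


Lemma qf_ext (C : numClosedFieldType) n (G : 'M[C]_n) (u w : 'I_n -> C) :
  (forall k, u k = w k) -> qf G u = qf G w.
Proof.
move=> E; rewrite !qfE; apply: eq_bigr => k _; apply: eq_bigr => l _; by rewrite !E.
Qed.

Lemma qf_scale (C : numClosedFieldType) n (G : 'M[C]_n) (v : 'I_n -> C) a :
  qf G (fun k => a * v k) = a * a^* * qf G v.
Proof.
rewrite !qfE mulr_sumr; apply: eq_bigr => k _; rewrite mulr_sumr; apply: eq_bigr => l _.
rewrite rmorphM /=; ring.
Qed.

Lemma onb_col (C : numClosedFieldType) n (f : 'I_n -> 'I_n -> C) : onb f ->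
  forall k l, \sum_i f i k * (f i l)^* = (k == l)%:R.
Proof.
move=> hf k l.
pose F := \matrix_(i, k) f i k.
pose A := \matrix_(i, k) (f i k)^*.
have H : A *m F^T = 1%:M.
  apply/matrixP => i j; rewrite !mxE -hf; apply: eq_bigr => m _; by rewrite !mxE.
have := mulmx1C H => /matrixP /(_ k l); rewrite !mxE => <-.
by apply: eq_bigr => i _; rewrite !mxE.
Qed.

Lemma onb_trace (C : numClosedFieldType) n (G : 'M[C]_n) (f : 'I_n -> 'I_n -> C) : onb f ->
  \sum_i qf G (f i) = \tr G.
Proof.
move=> hf.
transitivity (\sum_k \sum_l G k l * \sum_i f i k * (f i l)^*).
  rewrite exchange_big; apply: eq_bigr => k _.
  rewrite exchange_big; apply: eq_bigr => l _.
  by rewrite mulr_sumr; apply: eq_bigr => i _; ring.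
rewrite trE; apply: eq_bigr => k _.
under eq_bigr do rewrite onb_col // eq_sym.
by rewrite sum_delta_r.
Qed.

Lemma qf_lin (C : numClosedFieldType) m n (G : 'M[C]_n) (h : 'I_m -> 'I_n -> C) (w : 'I_m -> C) :
 qf G (fun k => \sum_a w a * h a k) =
   \sum_a \sum_b w a * (\sum_k \sum_l h a k * G k l * (h b l)^*) * (w b)^*.
Proof.
rewrite qfE.
transitivity (\sum_k \sum_l \sum_a \sum_b w a * (h a k * G k l * (h b l)^*) * (w b)^*).
  apply: eq_bigr => k _; apply: eq_bigr => l _.
  rewrite rmorph_sum /= mulr_suml mulr_suml; apply: eq_bigr => a _.
  rewrite mulr_sumr; apply: eq_bigr => b _; rewrite rmorphM /=; ring.
transitivity (\sum_k \sum_a \sum_b \sum_l w a * (h a k * G k l * (h b l)^*) * (w b)^*).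
  apply: eq_bigr => k _; rewrite exchange_big; apply: eq_bigr => a _.
  by rewrite exchange_big.
rewrite exchange_big; apply: eq_bigr => a _.
rewrite exchange_big; apply: eq_bigr => b _.
rewrite mulr_sumr mulr_suml; apply: eq_bigr => k _.
by rewrite mulr_sumr mulr_suml.
Qed.

Lemma ip_lin_l (C : numClosedFieldType) m n (h : 'I_m -> 'I_n -> C) (al : 'I_m -> C) (F : 'I_n -> C) :
  \sum_k (\sum_c al c * h c k)^* * F k = \sum_c (al c)^* * \sum_k (h c k)^* * F k.
Proof.
transitivity (\sum_k \sum_c (al c)^* * ((h c k)^* * F k)).
  apply: eq_bigr => k _; rewrite rmorph_sum /= mulr_suml; apply: eq_bigr => c _.
  by rewrite rmorphM /= mulrA.
by rewrite exchange_big; apply: eq_bigr => c _; rewrite mulr_sumr.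
Qed.

Lemma ip_lin_r (C : numClosedFieldType) m n (h : 'I_m -> 'I_n -> C) (be : 'I_m -> C) (F : 'I_n -> C) :
  \sum_k (F k)^* * (\sum_d be d * h d k) = \sum_d be d * \sum_k (F k)^* * h d k.
Proof.
transitivity (\sum_k \sum_d be d * ((F k)^* * h d k)).
  apply: eq_bigr => k _; rewrite mulr_sumr; apply: eq_bigr => d _; ring.
by rewrite exchange_big; apply: eq_bigr => d _; rewrite mulr_sumr.
Qed.


Lemma ZD (C : numClosedFieldType) n (G : 'M[C]_n) : \tr G = 0 ->
  exists e : 'I_n -> 'I_n -> C, onb e /\ forall i, qf G (e i) = 0.
Proof.
elim: n G => [|n IH] G trG.
  by exists (fun _ _ => 0); split => [[]|[]].
have [v [nv1 qv]] := NR G.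
rewrite trG mul0r in qv.
have [f [mu [hf f0]]] := complete nv1.
have qf0 : qf G (f ord0) = 0 by rewrite (qf_ext _ f0) qf_scale qv mulr0.
pose h (a : 'I_n) := f (lift ord0 a).
pose G' : 'M[C]_n := \matrix_(a, b) \sum_k \sum_l h a k * G k l * (h b l)^*.
have key : forall w, qf G (fun k => \sum_a w a * h a k) = qf G' w.
  move=> w; rewrite qf_lin qfE; apply: eq_bigr => a _; apply: eq_bigr => b _.
  by rewrite mxE.
have trG' : \tr G' = 0.
  have := onb_trace G hf; rewrite big_ord_recl /= qf0 add0r trG => <-.
  rewrite trE; apply: eq_bigr => a _; by rewrite mxE qfE.
have [g [hg qg]] := IH G' trG'.
pose e (i : 'I_n.+1) k := if unlift ord0 i is Some a then \sum_b g a b * h b k else f ord0 k.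
exists e; split.
  have hh : forall a b, \sum_k (h a k)^* * h b k = (a == b)%:R.
    by move=> a b; rewrite hf (inj_eq (@lift_inj _ ord0)).
  have h0 : forall a, \sum_k (h a k)^* * f ord0 k = 0.
    by move=> a; rewrite hf eq_sym (negbTE (neq_lift _ _)).
  have h0' : forall a, \sum_k (f ord0 k)^* * h a k = 0.
    by move=> a; rewrite hf (negbTE (neq_lift _ _)).
  move=> i j; rewrite /e.
  case: (unliftP ord0 i) => [a ->|->]; case: (unliftP ord0 j) => [b ->|->];
    rewrite ?liftK ?unlift_none.
  - rewrite ip_lin_l (inj_eq (@lift_inj _ ord0)) -hg; apply: eq_bigr => c _.
    rewrite ip_lin_r; under eq_bigr do rewrite hh eq_sym.
    by rewrite sum_delta_r.
  - rewrite ip_lin_l big1 ?(negbTE (neq_lift _ _)) // => c _.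
    by rewrite h0 mulr0.
  - rewrite ip_lin_r big1 ?(negbTE (neq_lift _ _)) // => c _.
    by rewrite h0' mulr0.
  - by rewrite hf.
move=> i; case: (unliftP ord0 i) => [a ->|->]; rewrite /e ?liftK ?unlift_none //.
by rewrite key qg.
Qed.


Section IP.
Lemma ipE (C : numClosedFieldType) p q (A B : 'M[C]_(p, q)) :
  ip A B = \sum_i \sum_j (A i j)^* * B i j.
Proof. by []. Qed.

Lemma ipDl (C : numClosedFieldType) p q (A B X : 'M[C]_(p, q)) : ip (A + B) X = ip A X + ip B X.
Proof.
rewrite !ipE -big_split; apply: eq_bigr => i _; rewrite -big_split; apply: eq_bigr => j _.
by rewrite mxE rmorphD /= mulrDl.
Qed.
Lemma ipDr (C : numClosedFieldType) p q (A B X : 'M[C]_(p, q)) : ip X (A + B) = ip X A + ip X B.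
Proof.
rewrite !ipE -big_split; apply: eq_bigr => i _; rewrite -big_split; apply: eq_bigr => j _.
by rewrite mxE mulrDr.
Qed.
Lemma ipZl (C : numClosedFieldType) p q a (A X : 'M[C]_(p, q)) : ip (a *: A) X = a^* * ip A X.
Proof.
rewrite !ipE mulr_sumr; apply: eq_bigr => i _; rewrite mulr_sumr; apply: eq_bigr => j _.
by rewrite mxE rmorphM /= mulrA.
Qed.
Lemma ipZr (C : numClosedFieldType) p q a (A X : 'M[C]_(p, q)) : ip X (a *: A) = a * ip X A.
Proof.
rewrite !ipE mulr_sumr; apply: eq_bigr => i _; rewrite mulr_sumr; apply: eq_bigr => j _.
by rewrite mxE mulrCA.
Qed.
Lemma ipNl (C : numClosedFieldType) p q (A X : 'M[C]_(p, q)) : ip (- A) X = - ip A X.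
Proof. by rewrite -scaleN1r ipZl rmorphN rmorph1 mulN1r. Qed.
Lemma ipNr (C : numClosedFieldType) p q (A X : 'M[C]_(p, q)) : ip X (- A) = - ip X A.
Proof. by rewrite -scaleN1r ipZr mulN1r. Qed.
Lemma ipC (C : numClosedFieldType) p q (A X : 'M[C]_(p, q)) : ip X A = (ip A X)^*.
Proof.
rewrite !ipE rmorph_sum; apply: eq_bigr => i _; rewrite rmorph_sum; apply: eq_bigr => j _.
by rewrite rmorphM /= conjCK mulrC.
Qed.
Lemma ip_ge0 (C : numClosedFieldType) p q (A : 'M[C]_(p, q)) : 0 <= ip A A.
Proof.
rewrite ipE; apply: sumr_ge0 => i _; apply: sumr_ge0 => j _.
by rewrite mulrC mul_conjC_ge0.
Qed.
Lemma ip_eq0 (C : numClosedFieldType) p q (A : 'M[C]_(p, q)) : ip A A = 0 -> A = 0.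
Proof.
rewrite ipE => /eqP; rewrite psumr_eq0; last first.
  by move=> i _; apply: sumr_ge0 => j _; rewrite mulrC mul_conjC_ge0.
move=> /allP H; apply/matrixP => i j; rewrite mxE.
have := H i (mem_index_enum _); rewrite psumr_eq0; last by move=> k _; rewrite mulrC mul_conjC_ge0.
move=> /allP /(_ j (mem_index_enum _)) /=.
by rewrite mulrC mul_conjC_eq0 => /eqP.
Qed.
End IP.


Lemma row_facts (C : numClosedFieldType) (s t ss st A B r k : C) :
  0 < ss -> 0 < st -> ss ^+ 2 = s -> st ^+ 2 = t -> 0 <= A ->
  k \is Num.real -> k <= 0 -> 0 <= 1 + 2 * k ->
  0 <= t * B - st * ss * (r + r^*) + s * A ->
  st * ss * r^* - s * A = k * (t * B - st * ss * (r + r^*) + s * A) ->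
  [/\ r \is Num.real, s * A <= t * B & st * r <= ss * A].
Proof.
move=> ss0 st0 ss2 st2 A0 kR k0 k1 q0 E.
set q := t * B - _ + _ in q0 E.
have ssR : ss \is Num.real by rewrite gtr0_real.
have stR : st \is Num.real by rewrite gtr0_real.
have sR : s \is Num.real by rewrite -ss2 rpredX.
have AR : A \is Num.real by rewrite ger0_real.
have qR : q \is Num.real by rewrite ger0_real.
have sst0 : st * ss != 0 by rewrite mulf_neq0 // gt_eqF.
have rcR : r^* \is Num.real.
  have ssn : ss != 0 by rewrite gt_eqF.
  have stn : st != 0 by rewrite gt_eqF.
  have -> : r^* = (k * q + s * A) / (st * ss) by rewrite -E; field; rewrite ?stn ?ssn.
  by rewrite rpredM ?rpredV ?rpredD ?rpredM.
have rc : r^* = r.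
  by move: rcR; rewrite CrealE conjCK => /eqP h; rewrite -h.
have rR : r \is Num.real by rewrite -rc.
rewrite rc in E q0.
split => //.
  have -> : t * B = s * A + (t * B - s * A) by ring.
  rewrite lerDl.
  have -> : t * B - s * A = q + 2 * (st * ss * r - s * A) by rewrite /q rc; ring.
  rewrite E.
  have -> : q + 2 * (k * q) = q * (1 + 2 * k) by ring.
  exact: mulr_ge0.
rewrite -subr_le0 -(pmulr_rle0 _ ss0).
have -> : ss * (st * r - ss * A) = st * ss * r - s * A by rewrite -ss2; ring.
by rewrite E mulr_le0_ge0.
Qed.


Lemma ip_unit (C : numClosedFieldType) p q (x : 'M[C]_(p, q)) : ip x x != 0 ->
  ip ((sqrtC (ip x x))^-1 *: x) ((sqrtC (ip x x))^-1 *: x) = 1.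
Proof.
move=> h.
have h0 : 0 <= (sqrtC (ip x x))^-1 by rewrite invr_ge0 sqrtC_ge0 ip_ge0.
have hs : sqrtC (ip x x) != 0 by rewrite sqrtC_eq0.
rewrite ipZl ipZr geC0_conj // mulrA -invfM -expr2 sqrtCK mulVf //.
Qed.

Lemma ip_scale_back (C : numClosedFieldType) p q (x y : 'M[C]_(p, q)) :
  sqrtC (ip x x) *: (if ip x x == 0 then y else (sqrtC (ip x x))^-1 *: x) = x.
Proof.
case: eqP => [h|/eqP h]; first by rewrite h sqrtC0 scale0r (ip_eq0 h).
by rewrite scalerA mulfV ?scale1r // sqrtC_eq0.
Qed.

Lemma tens_scale (C : numClosedFieldType) n m a (u : 'rV[C]_n) (v : 'rV[C]_m) :
  a *: tens u v = tens u (a *: v).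
Proof. by apply/matrixP => i j; rewrite !mxE mulrCA. Qed.

Lemma ipN2 (C : numClosedFieldType) p q (x : 'M[C]_(p, q)) : ip (- x) (- x) = ip x x.
Proof. by rewrite ipNl ipNr opprK. Qed.

Unset Implicit Arguments.
Theorem lemma3 (C : numClosedFieldType) (n m : nat) (phi psi : 'M[C]_(n, m))
  (s t : C) :
  ip phi phi = 1 -> ip psi psi = 1 -> 0 < ip phi psi ->
  0 < s -> 0 < t -> s + t = 1 -> s <= t -> ip phi psi <= sqrtC (s / t) ->
  exists (e : 'I_n -> 'rV[C]_n) (si ti : 'I_n -> C)
         (eta gam : 'I_n -> 'rV[C]_m),
    (forall i j, ip (e i) (e j) = (i == j)%:R) /\
    (forall i, 0 <= si i /\ 0 <= ti i) /\
    (forall i, ip (eta i) (eta i) = 1 /\ ip (gam i) (gam i) = 1) /\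
    phi = \sum_(i < n) sqrtC (si i) *: tens (e i) (eta i) /\
    psi = \sum_(i < n) sqrtC (ti i) *: tens (e i) (gam i) /\
    (forall i, [/\ ip (eta i) (gam i) \is Num.real,
                       s * si i <= t * ti i &
                       sqrtC (t * ti i) * ip (eta i) (gam i) <= sqrtC (s * si i)]).
Proof.
move=> hphi hpsi hc s0 t0 st1 slt hcs.
have m0 : (0 < m)%N.
  case: (posnP m) => // m0; subst m; exfalso.
  move: hphi; rewrite ipE (eq_bigr (fun _ => 0)) ?big1 // => [/eqP|i _].
    by rewrite eq_sym oner_eq0.
  by rewrite big_ord0.
pose j0 := Ordinal m0.
pose ss := sqrtC s. pose st := sqrtC t.
have ss0 : 0 < ss by rewrite sqrtC_gt0.
have st0 : 0 < st by rewrite sqrtC_gt0.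
have ss2 : ss ^+ 2 = s by rewrite sqrtCK.
have st2 : st ^+ 2 = t by rewrite sqrtCK.
have ssc : ss^* = ss by rewrite geC0_conj // ltW.
have stc : st^* = st by rewrite geC0_conj // ltW.
set c := ip phi psi in hc hcs.
have cc : c^* = c by rewrite geC0_conj // ltW.
have ipc : ip psi phi = c by rewrite ipC.
pose D := st *: psi - ss *: phi.
pose U := ss *: phi.
have DU : ip D U = st * ss * c - s.
  rewrite /D /U ipDl ipNl !ipZl !ipZr ipc hphi stc ssc -ss2; ring.
have DD : ip D D = t + s - 2 * st * ss * c.
  rewrite /D ipDl ipNl !ipZl !ipDr !ipNr !ipZr ipc hphi hpsi stc ssc -ss2 -st2 -/c; ring.
pose k := ip D U / ip D D.
have DD0 : 0 <= ip D D by exact: ip_ge0.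
have DUle : ip D U <= 0.
  rewrite DU subr_le0.
  have h : st * ss * sqrtC (s / t) = s.
    rewrite mulrAC -sqrtCM ?nnegrE ?divr_ge0 ?ltW // [t * _]mulrC divfK ?gt_eqF //.
  rewrite -h; apply: ler_wpM2l => //.
  by rewrite mulr_ge0 // ltW.
have kR : k \is Num.real.
  by apply: rpredM; [exact: ler0_real | rewrite rpredV; exact: ger0_real].
have kc : k^* = k by rewrite conj_Creal.
have k0 : k <= 0 by rewrite /k mulr_le0_ge0 // invr_ge0.
have k1 : 0 <= 1 + 2 * k.
  case: (eqVneq (ip D D) 0) => h.
    by rewrite /k h invr0 !mulr0 addr0 ler01.
  have -> : 1 + 2 * k = (ip D D + 2 * ip D U) / ip D D by rewrite /k; field.
  rewrite divr_ge0 // DU DD.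
  have -> : t + s - 2 * st * ss * c + 2 * (st * ss * c - s) = t - s by ring.
  by rewrite subr_ge0.
pose Y := U - k *: D.
have DY : ip D Y = 0.
  rewrite /Y ipDr ipNr ipZr /k.
  case: (eqVneq (ip D D) 0) => h.
    rewrite h mulr0 subr0 (ip_eq0 h) ipE big1 // => i _.
    by rewrite big1 // => j _; rewrite mxE rmorph0 mul0r.
  by rewrite divfK // subrr.
pose G : 'M[C]_n := \matrix_(a, b) \sum_j (D a j)^* * Y b j.
have trG : \tr G = 0.
  by rewrite -DY trE ipE; apply: eq_bigr => i _; rewrite mxE.
have [e [he qe]] := ZD trG.
pose R (X : 'M[C]_(n, m)) i : 'rV[C]_m := \row_j \sum_k (e i k)^* * X k j.
have RD : forall X Z i, R (X + Z) i = R X i + R Z i.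
  move=> X Z i; apply/matrixP => r j; rewrite !mxE -big_split; apply: eq_bigr => q _.
  by rewrite mxE mulrDr.
have RZ : forall a X i, R (a *: X) i = a *: R X i.
  move=> a X i; apply/matrixP => r j; rewrite !mxE mulr_sumr; apply: eq_bigr => q _.
  by rewrite mxE mulrCA.
have RN : forall X i, R (- X) i = - R X i.
  by move=> X i; rewrite -scaleN1r RZ scaleN1r.
have Rqf : forall i, ip (R D i) (R Y i) = 0.
  move=> i; rewrite -(qe i) ipE big_ord1 qfE.
  transitivity (\sum_j \sum_a \sum_b e i a * (D a j)^* * (e i b)^* * Y b j).
    apply: eq_bigr => j _; rewrite !mxE rmorph_sum mulr_suml; apply: eq_bigr => a _.
    rewrite mulr_sumr; apply: eq_bigr => b _; rewrite rmorphM /= conjCK; ring.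
  rewrite exchange_big; apply: eq_bigr => a _; rewrite exchange_big; apply: eq_bigr => b _.
  rewrite mxE mulr_sumr mulr_suml; apply: eq_bigr => j _; ring.
pose a i := R phi i.
pose b i := R psi i.
have rowf : forall i, [/\ ip (a i) (b i) \is Num.real,
   s * ip (a i) (a i) <= t * ip (b i) (b i) & st * ip (a i) (b i) <= ss * ip (a i) (a i)].
  move=> i.
  have RDi : R D i = st *: b i - ss *: a i by rewrite /D RD RN !RZ.
  have RYi : R Y i = ss *: a i - k *: R D i by rewrite /Y /U RD RN !RZ.
  have ba : ip (b i) (a i) = (ip (a i) (b i))^* by rewrite ipC.
  have dd : ip (R D i) (R D i) = t * ip (b i) (b i)
      - st * ss * (ip (a i) (b i) + (ip (a i) (b i))^*) + s * ip (a i) (a i).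
    rewrite RDi ipDl ipNl !ipZl !ipDr !ipNr !ipZr ba stc ssc -ss2 -st2; ring.
  have du : ip (R D i) (ss *: a i) = st * ss * (ip (a i) (b i))^* - s * ip (a i) (a i).
    rewrite RDi ipDl ipNl !ipZl !ipZr ba stc ssc -ss2; ring.
  apply: (row_facts (k:=k)) => //; first exact: ip_ge0.
    by rewrite -dd ip_ge0.
  have := Rqf i; rewrite RYi ipDr ipNr du ipZr => /eqP; rewrite subr_eq0 => /eqP ->.
  by rewrite dd.
pose e' i : 'rV[C]_n := \row_q e i q.
pose si i := ip (a i) (a i).
pose ti i := ip (b i) (b i).
pose del : 'rV[C]_m := \row_j (j == j0)%:R.
have del1 : ip del del = 1.
  rewrite ipE big_ord1.
  transitivity (\sum_j ((j == j0)%:R : C)^* * (j == j0)%:R).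
    by apply: eq_bigr => j _; rewrite !mxE.
  by rewrite sum_delta_r eqxx rmorph1.
pose gam i := if ti i == 0 then del else (sqrtC (ti i))^-1 *: b i.
pose eta i := if si i == 0 then - gam i else (sqrtC (si i))^-1 *: a i.
have gam1 : forall i, ip (gam i) (gam i) = 1.
  by move=> i; rewrite /gam; case: ifP => [_|/negbT h]; [exact: del1 | exact: ip_unit].
have decomp : forall X, X = \sum_i tens (e' i) (R X i).
  move=> X; apply/matrixP => p j; rewrite summxE.
  transitivity (\sum_q (\sum_i e i p * (e i q)^*) * X q j).
    by rewrite (eq_bigr _ (fun q _ => congr1 (fun z => z * X q j) (onb_col he p q))) sum_delta_l.
  under eq_bigr do rewrite mulr_suml.
  rewrite exchange_big; apply: eq_bigr => i _; rewrite !mxE mulr_sumr.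
  by apply: eq_bigr => q _; rewrite mulrA.
exists e', si, ti, eta, gam; split.
  move=> i j; rewrite ipE big_ord1 -he; apply: eq_bigr => q _; by rewrite !mxE.
split.
  by move=> i; rewrite !ip_ge0.
split.
  move=> i; split => //; rewrite /eta; case: ifP => [_|/negbT h].
    by rewrite ipN2.
  exact: ip_unit.
split.
  rewrite {1}[phi]decomp; apply: eq_bigr => i _; rewrite tens_scale; congr tens.
  by rewrite /eta /gam ip_scale_back.
split.
  rewrite {1}[psi]decomp; apply: eq_bigr => i _; rewrite tens_scale; congr tens.
  by rewrite /gam ip_scale_back.
move=> i; have [rR sle stle] := rowf i.
rewrite /eta; case: ifP => [/eqP si0|/negbT si0].
  rewrite ipNl gam1 si0 mulr0 sqrtC0 mulrN1 oppr_le0 sqrtC_ge0 rpredN rpred1.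
  by split => //; rewrite mulr_ge0 ?ip_ge0 // ltW.
have si0' : 0 < si i by rewrite lt_def si0 ip_ge0.
have ti0 : ti i != 0.
  apply/eqP => h.
  have H : 0 < s * si i by apply: mulr_gt0.
  by have := lt_le_trans H sle; rewrite -/(ti i) h mulr0 ltxx.
have ti0' : 0 < ti i by rewrite lt_def ti0 ip_ge0.
rewrite /gam (negbTE ti0).
have x0 : 0 < sqrtC (si i) by rewrite sqrtC_gt0.
have y0 : 0 < sqrtC (ti i) by rewrite sqrtC_gt0.
have xn : sqrtC (si i) != 0 by rewrite gt_eqF.
have yn : sqrtC (ti i) != 0 by rewrite gt_eqF.
have xi : ((sqrtC (si i))^-1)^* = (sqrtC (si i))^-1 by rewrite geC0_conj // invr_ge0 ltW.
rewrite ipZl ipZr xi.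
split => //.
  apply: rpredM; first by rewrite rpredV gtr0_real.
  by apply: rpredM => //; rewrite rpredV gtr0_real.
have h1 : sqrtC (t * ti i) = st * sqrtC (ti i) by rewrite sqrtCM // nnegrE ltW.
have h2 : sqrtC (s * si i) = ss * sqrtC (si i) by rewrite sqrtCM // nnegrE ltW.
rewrite h1 h2.
have -> : st * sqrtC (ti i) * ((sqrtC (si i))^-1 * ((sqrtC (ti i))^-1 * ip (a i) (b i)))
   = (st * ip (a i) (b i)) / sqrtC (si i) by field; rewrite xn yn.
rewrite ler_pdivrMr // -mulrA -expr2 sqrtCK.
exact: stle.
Qed.
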